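(* Let ${\bf u}\in\mathcal A^{\mathbb N}$ be an infinite word with its language closed under reversal and $D({\bf u})<+\infty$. There exists a positive integer $K$ such that for every factor $w$ of ${\bf u}$ of length at least $K$: if $w$ is not a palindrome, then the graph $\Gamma(w)$ is a tree; if $w$ is a palindrome, then the graph $\Theta(w)$ is a tree.
   Context: $\widetilde w$ is the reversal of $w$; $w$ is a palindrome if $w=\widetilde w$. Palindromic defect: for a finite word $w$ of length $n$, $D(w)=n+1-$(number of distinct palindromic factors of $w$, including the empty word), and $D({\bf u})=\sup D(w)$ over factors of ${\bf u}$. The language is closed under reversal if the reversal of every factor is a factor. With $E^+(w)=\{b: wb\text{ factor}\}$, $E^-(w)=\{a: aw\text{ factor}\}$, $E(w)=\{(a,b): awb\text{ factor}\}$: $\Gamma(w)$ is the bipartite graph on $(E^-(w)\times\{-1\})\cup(E^+(w)\times\{+1\})$ with edges $\{(a,-1),(b,+1)\}$ for $(a,b)\in E(w)$; for palindromic $w$, $\Theta(w)$ is the graph on $E^+(w)$ with edges $\{a,b\}$ for $(a,b)\in E(w)$, $a\neq b$. *)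

(* Defs.v *)
From Stdlib Require ClassicalDescription.
From mathcomp Require Import all_boot.

Set Implicit Arguments.
Unset Strict Implicit.
Unset Printing Implicit Defensive.

Definition factor (A : Type) (u : nat -> A) (w : seq A) : Prop :=
  exists i : nat, w = mkseq (fun k => u (i + k)) (size w).

Definition factorb (A : Type) (u : nat -> A) (w : seq A) : bool :=
  if ClassicalDescription.excluded_middle_informative (factor u w) then true else false.

Definition palindrome (A : eqType) (w : seq A) : bool := w == rev w.

Definition factors_of (A : Type) (w : seq A) : seq (seq A) :=
  [seq take j (drop i w) | i <- iota 0 (size w).+1, j <- iota 0 (size w).+1].

(* number of distinct palindromic factors of w, including the empty word *)
Definition pal_count (A : eqType) (w : seq A) : nat :=
  size (undup (filter (@palindrome A) (factors_of w))).

Definition defect (A : eqType) (w : seq A) : nat := (size w).+1 - pal_count w.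

Definition finite_defect (A : eqType) (u : nat -> A) : Prop :=
  exists B : nat, forall w, factor u w -> defect w <= B.

Definition closed_under_reversal (A : Type) (u : nat -> A) : Prop :=
  forall w, factor u w -> factor u (rev w).

Definition connectedG (T : finType) (V : {set T}) (e : rel T) : Prop :=
  forall x y, x \in V -> y \in V ->
    connect (fun a b => [&& e a b, a \in V & b \in V]) x y.

Definition acyclicG (T : finType) (V : {set T}) (e : rel T) : Prop :=
  forall c : seq T, {subset c <= V} -> uniq c -> 3 <= size c -> ~~ cycle e c.

Definition is_tree (T : finType) (V : {set T}) (e : rel T) : Prop :=
  [/\ V != set0, connectedG V e & acyclicG V e].

(* ---- Gamma(w): bipartite graph; (a,false) encodes (a,-1), (b,true) encodes (b,+1) ---- *)
Definition Gamma_V (A : finType) (u : nat -> A) (w : seq A) : {set A * bool} :=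
  [set x : A * bool | if x.2 then factorb u (rcons w x.1) else factorb u (x.1 :: w)].

Definition Gamma_E (A : finType) (u : nat -> A) (w : seq A) : rel (A * bool) :=
  fun x y => (x.2 != y.2) &&
    (if x.2 then factorb u (y.1 :: rcons w x.1) else factorb u (x.1 :: rcons w y.1)).

Definition Theta_V (A : finType) (u : nat -> A) (w : seq A) : {set A} :=
  [set b : A | factorb u (rcons w b)].

Definition Theta_E (A : finType) (u : nat -> A) (w : seq A) : rel A :=
  fun a b => (a != b) &&
    (factorb u (a :: rcons w b) || factorb u (b :: rcons w a)).

(* Main.v *)
Require Import Defs.
From mathcomp Require Import all_boot zify.
Set Implicit Arguments. Unset Strict Implicit. Unset Printing Implicit Defensive.

Section Basic.
Variables (A : finType) (u : nat -> A).

Definition sub (i n : nat) : seq A := map u (iota i n).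

Lemma size_sub i n : size (sub i n) = n.
Proof. by rewrite /sub size_map size_iota. Qed.

Lemma nth_sub x0 i n k : k < n -> nth x0 (sub i n) k = u (i + k).
Proof. move=> kn; rewrite /sub (nth_map 0) ?size_iota // nth_iota //. Qed.

Lemma factorE w : factor u w <-> exists i, w = sub i (size w).
Proof.
have E i n : mkseq (fun k => u (i + k)) n = sub i n.
  by rewrite /mkseq /sub -{2}(addn0 i) iotaDl -map_comp.
by split=> [[i ->]|[i ->]]; exists i; rewrite E // size_sub.
Qed.

Lemma sub_eqP i j n : sub i n = sub j n <-> forall k, k < n -> u (i + k) = u (j + k).
Proof.
split=> [H k kn|H].
  by rewrite -(nth_sub (u 0) i kn) -(nth_sub (u 0) j kn) H.
apply: (@eq_from_nth _ (u 0)); rewrite !size_sub // => k kn.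
by rewrite !nth_sub // H.
Qed.

Lemma sub_add i a b : sub i (a + b) = sub i a ++ sub (i + a) b.
Proof. by rewrite /sub iotaD map_cat. Qed.

Lemma subS i n : sub i n.+1 = u i :: sub i.+1 n.
Proof. by []. Qed.

Lemma subSr i n : sub i n.+1 = rcons (sub i n) (u (i + n)).
Proof. by rewrite -addn1 sub_add cats1. Qed.

Lemma rev_subP i j n : rev (sub i n) = sub j n <->
  forall k, k < n -> u (i + (n - k.+1)) = u (j + k).
Proof.
split=> [H k kn|H].
  rewrite -(nth_sub (u 0) j kn) -H nth_rev size_sub // nth_sub //; try lia; try done.
apply: (@eq_from_nth _ (u 0)); rewrite ?size_rev !size_sub // => k kn.
rewrite nth_rev size_sub // nth_sub ?H //; try lia; try done; rewrite nth_sub //. 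
Qed.

Definition pal s e := forall k, s <= k < e -> u k = u (s + e - 1 - k).

Lemma mirror s e k n : pal s e -> s <= k -> k + n <= e ->
  sub (s + e - n - k) n = rev (sub k n).
Proof.
move=> P sk kn; symmetry; apply/rev_subP => t tn.
rewrite P; last by lia.
congr u; lia.
Qed.

Lemma palindromeP i L : palindrome (sub i L) <-> pal i (i + L).
Proof.
rewrite /palindrome; split.
  move/eqP => H k /andP[k1 k2].
  have := (proj1 (rev_subP i i L)) (esym H) (k - i) ltac:(lia).
  move=> E; transitivity (u (i + (k - i))); first by congr u; lia.
  rewrite -E; congr u; lia.
move=> P; apply/eqP; symmetry; apply/rev_subP => k kn.
rewrite P; last by lia. congr u; lia.
Qed.


Lemma take_drop_sub s e i j : take j (drop i (sub s e)) = sub (s + i) (minn j (e - i)).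
Proof. by rewrite /sub -map_drop -map_take drop_iota take_iota. Qed.

Lemma factors_ofP e (y : seq A) : y \in factors_of (sub 0 e) <->
  exists i, i + size y <= e /\ y = sub i (size y).
Proof.
split.
  move/allpairsP => [[i j] [Hi Hj ->]].
  move: Hi Hj; rewrite !mem_iota size_sub /= => Hi Hj.
  exists i; rewrite take_drop_sub size_sub add0n; split; first by lia.
  by [].
move=> [i [H1 H2]]; apply/allpairsP; exists (i, size y).
rewrite !mem_iota size_sub /= take_drop_sub add0n; split; try lia.
by rewrite add0n (_ : minn (size y) (e - i) = size y) //; lia.
Qed.

Definition pc e := pal_count (sub 0 e).
Definition NP e := exists L, L <= e /\ pal (e - L) e /\
  forall t, t + L < e -> sub t L <> sub (e - L) L.

Lemma new_pal e (y : seq A) : y \in filter (@palindrome A) (factors_of (sub 0 e.+1)) ->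
  y \notin filter (@palindrome A) (factors_of (sub 0 e)) ->
  NP e.+1 /\ size y <= e.+1 /\ y = sub (e.+1 - size y) (size y).
Proof.
rewrite !mem_filter => /andP[Py /factors_ofP [i [H1 H2]]].
rewrite Py /= => Hn.
have Hi : i + size y = e.+1.
  case: (ltngtP (i + size y) e.+1) => // Hlt; last by lia.
  by case/negP: Hn; apply/factors_ofP; exists i; split => //; lia.
have Ei : i = e.+1 - size y by lia.
split; last by split; [lia| rewrite -Ei].
exists (size y); split; first by lia.
split.
  rewrite -Ei; have := proj1 (palindromeP i (size y)); rewrite -H2 Hi; exact.
move=> t tL Et; case/negP: Hn; apply/factors_ofP; exists t; split; first by lia.
by rewrite Et -Ei.
Qed.

Lemma new_pal_uniq e (y1 y2 : seq A) :
  y1 \in filter (@palindrome A) (factors_of (sub 0 e.+1)) ->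
  y1 \notin filter (@palindrome A) (factors_of (sub 0 e)) ->
  y2 \in filter (@palindrome A) (factors_of (sub 0 e.+1)) ->
  y2 \notin filter (@palindrome A) (factors_of (sub 0 e)) -> y1 = y2.
Proof.
wlog: y1 y2 / size y1 <= size y2.
  move=> W H1 H2 H3 H4; case: (leqP (size y1) (size y2)) => L.
    exact: W.
  by symmetry; apply: W => //; lia.
move=> Hle H1 H2 H3 H4.
have [_ [S1 E1]] := new_pal H1 H2.
have [_ [S2 E2]] := new_pal H3 H4.
case: (ltngtP (size y1) (size y2)) => Hs; last 1 first.
  by rewrite E1 E2 Hs.
  2: by lia.
move: H1; rewrite !mem_filter => /andP[Py1 _].
case/negP: H2; rewrite mem_filter Py1 /=; apply/factors_ofP.
have P2' : pal (e.+1 - size y2) e.+1.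
  move: H3; rewrite mem_filter => /andP[Py2 _].
  rewrite E2 in Py2. move/palindromeP: Py2.
  move=> P; move=> k Hk; rewrite P; last by lia.
  congr u; lia.
exists (e.+1 - size y2); split; first by lia.
have M := mirror (k := e.+1 - size y1) (n := size y1) P2' ltac:(lia) ltac:(lia).
rewrite (_ : e.+1 - size y2 + e.+1 - size y1 - (e.+1 - size y1) = e.+1 - size y2) in M; last by lia.
rewrite M -E1. by move/eqP: Py1.
Qed.


Lemma pc_step e : pc e.+1 <= (pc e).+1 /\ (~ NP e.+1 -> pc e.+1 <= pc e).
Proof.
rewrite /pc /pal_count.
set l := filter (@palindrome A) (factors_of (sub 0 e)).
set l' := filter (@palindrome A) (factors_of (sub 0 e.+1)).
case: (boolP (all (fun y => y \in l) l')) => Hall.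
  have H : size (undup l') <= size (undup l).
    apply: uniq_leq_size; first exact: undup_uniq.
    by move=> y; rewrite !mem_undup => /(allP Hall).
  by split => //; lia.
move: Hall => /allPn [y0 Hy0 Hn0].
have [HNP _] := new_pal Hy0 Hn0.
split; last by [].
have H : size (undup l') <= size (y0 :: undup l).
  apply: uniq_leq_size; first exact: undup_uniq.
  move=> y; rewrite !mem_undup in_cons => Hy.
  case: (boolP (y \in l)) => Hyl; first by rewrite mem_undup Hyl orbT.
  by rewrite (new_pal_uniq Hy Hyl Hy0 Hn0) eqxx.
by move: H => /=.
Qed.

Lemma pc0 : pc 0 = 1.
Proof. by rewrite /pc /pal_count /factors_of /= /palindrome /=. Qed.

Lemma pc_le e : pc e <= e.+1.
Proof.
elim: e => [|e IH]; first by rewrite pc0.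
have [H _] := pc_step e; lia.
Qed.

Definition Dp e := defect (sub 0 e).

Lemma DpE e : Dp e = e.+1 - pc e.
Proof. by rewrite /Dp /defect size_sub. Qed.

Lemma Dp_mono e e' : e <= e' -> Dp e <= Dp e'.
Proof.
elim: e' => [|e' IH] H.
  by rewrite (_ : e = 0) //; lia.
case: (ltngtP e e'.+1) => H2; last by rewrite H2.
  have := IH ltac:(lia); have [S _] := pc_step e'; have := pc_le e'.
  rewrite !DpE; lia.
lia.
Qed.

Lemma Dp_bad e : ~ NP e.+1 -> (Dp e).+1 <= Dp e.+1.
Proof.
move=> H; have [_ S] := pc_step e; have := S H; have := pc_le e.
rewrite !DpE; lia.
Qed.

Lemma NP_eventually : finite_defect u -> exists N, forall e, N < e -> NP e.
Proof.
move=> [B HB].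
apply: Classical_Prop.NNPP => Hno.
have Hbad : forall M, exists e, M < e /\ ~ NP e.
  move=> M; apply: Classical_Prop.NNPP => Hn; apply: Hno; exists M => e Me.
  apply: Classical_Prop.NNPP => Hne; apply: Hn; by exists e.
have Hgrow : forall k, exists e, k <= Dp e.
  elim=> [|k [e He]]; first by exists 0.
  have [e' [H1 H2]] := Hbad e.
  case: e' H1 H2 => [|e''] H1 H2; first by lia.
  exists e''.+1; have := Dp_bad H2; have := Dp_mono (e := e) (e' := e'') ltac:(lia); lia.
have [e He] := Hgrow B.+1.
have := HB (sub 0 e); rewrite -/(Dp e).
have F : factor u (sub 0 e) by apply/factorE; exists 0; rewrite size_sub.
move=> /(_ F); lia.
Qed.


Section CRsec.
Variable N : nat.
Hypothesis HNP : forall e, N < e -> NP e.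

Lemma pal_sub_rev s e : pal s e -> forall k n, s <= k -> k + n <= e ->
  sub (s + e - n - k) n = rev (sub k n).
Proof. move=> P k n; exact: mirror. Qed.

Lemma CR n (p : seq A) : N < n ->
  forall e j j', j < j' -> j' + n = e ->
   (sub j n = p \/ sub j n = rev p) -> (sub j' n = p \/ sub j' n = rev p) ->
   (forall k, j < k < j' -> sub k n <> p /\ sub k n <> rev p) ->
   pal j e.
Proof.
move=> Nn e; elim/ltn_ind: e => e IH j j' jj' Ee Sj Sj' Hb.
have [L [HL [PQ Hnew]]] := HNP (e := e) ltac:(lia).
have Hrel : sub j n = sub j' n \/ sub j n = rev (sub j' n).
  case: Sj => ->; case: Sj' => ->; rewrite ?revK; tauto.
have inS_rev : forall m k, (sub k n = p \/ sub k n = rev p) -> sub m n = rev (sub k n) ->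
    (sub m n = p \/ sub m n = rev p).
  by move=> m k [->|->] ->; rewrite ?revK; tauto.
case: (ltnP L n) => HLn.
  exfalso; case: Hrel => Hr.
    apply: (Hnew (j + n - L)); first by lia.
    apply/sub_eqP => k kL.
    have := (proj1 (sub_eqP j j' n)) Hr (n - L + k) ltac:(lia).
    by rewrite (_ : j + (n - L + k) = j + n - L + k); [move=> -> ; congr u|]; lia.
  apply: (Hnew j); first by lia.
  apply/sub_eqP => k kL.
  have := (proj1 (rev_subP j' j n)) (esym Hr) k ltac:(lia).
  move=> <-; rewrite PQ; last by lia.
  congr u; lia.
case: (ltngtP L n) => HLn2; first by lia.
  2: {
  exfalso.
  have Pj' : pal j' e by rewrite (_ : j' = e - L) //; lia.
  have Rj' : sub j' n = rev (sub j' n).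
    have := pal_sub_rev Pj' (k := j') (n := n) ltac:(lia) ltac:(lia).
    by rewrite (_ : j' + e - n - j' = j') //; lia.
  apply: (Hnew j); first by lia.
  rewrite (_ : e - L = j') ?HLn2; last by lia.
  by case: Hrel => ->.
  }
have Hs : sub (e - L) n = rev (sub j' n).
  have := pal_sub_rev PQ (k := j') (n := n) ltac:(lia) ltac:(lia).
  by rewrite (_ : e - L + e - n - j' = e - L) //; lia.
case: (ltngtP L (e - j)) => HLe.
- (* n < L < e - j : occurrence strictly between *)
  exfalso; have [H1 H2] := Hb (e - L) ltac:(lia).
  by case: (inS_rev (e - L) j' Sj' Hs).
- (* L > e - j : descent *)
  have Sm : sub (e - L + j' - j) n = rev (sub j n).
    have := pal_sub_rev PQ (k := j) (n := n) ltac:(lia) ltac:(lia).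
    by rewrite (_ : e - L + e - n - j = e - L + j' - j) //; lia.
  have Ps : pal (e - L) (e - L + j' - j + n).
    apply: (IH _ _ (e - L) (e - L + j' - j)) => //; try lia.
    + exact: inS_rev Sj' Hs.
    + exact: inS_rev Sj Sm.
    move=> k Hk.
    have Mk := pal_sub_rev PQ (k := k) (n := n) ltac:(lia) ltac:(lia).
    have [H1 H2] := Hb (e - L + e - n - k) ltac:(lia).
    by split => Hk'; [case: (inS_rev _ k (or_introl Hk') Mk) | case: (inS_rev _ k (or_intror Hk') Mk)].
  move=> k Hk.
  rewrite PQ; last by lia.
  rewrite Ps; last by lia.
  rewrite PQ; last by lia.
  congr u; lia.
- by rewrite (_ : j = e - L) //; lia.
Qed.

Lemma Claim n (p : seq A) : N < n ->
 forall i' i, 0 < i -> i < i' -> sub i n = p -> sub i' n = rev p ->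
  u (i - 1) = u (i' + n) ->
  (forall j, i <= j < i' -> sub j n = rev p -> u (j + n) <> u (i - 1)) ->
  (forall j, i < j <= i' -> sub j n = p -> u (j - 1) <> u (i - 1)) ->
  u (i' - 1) = u (i + n).
Proof.
move=> Nn i'; elim/ltn_ind: i' => i' IH i i0 ii' Si Si' Ex H1 H2.
have [L [HL [PQ Hnew]]] := HNP (e := i' + n + 1) ltac:(lia).
have Rii : forall m, m < n -> u (i + (n - m.+1)) = u (i' + m).
  by apply/rev_subP; rewrite Si Si'.
case: (ltnP L 2) => HL2.
  exfalso; case: (ltnP L 1) => HL1.
    by apply: (Hnew 0); [lia | rewrite (_ : L = 0) //; lia].
  apply: (Hnew (i - 1)); first by lia.
  rewrite (_ : L = 1); last by lia.
  apply/sub_eqP => k k1; rewrite (_ : k = 0); last by lia.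
  by rewrite !addn0 Ex; congr u; lia.
case: (leqP L n.+1) => HLn.
  exfalso; apply: (Hnew (i - 1)); first by lia.
  apply/sub_eqP => k kL.
  case: (posnP k) => [->|kpos].
    rewrite addn0 Ex PQ; last by lia.
    congr u; lia.
  rewrite [RHS]PQ; last by lia.
  have := Rii (n - k) ltac:(lia).
  move=> E; transitivity (u (i + (n - (n - k).+1))); first by congr u; lia.
  rewrite E; congr u; lia.
set e := i' + n + 1.
have E1 : u (e - L) = u (i - 1) by rewrite PQ ?Ex; [congr u | ]; lia.
case: (ltngtP L n.+2) => HLn2; first by lia.
  2: {
  exfalso.
  have Pz : pal (i' - 1) (i' + n + 1) by rewrite (_ : i' - 1 = e - L) //; lia.
  have M := mirror Pz (k := i') (n := n) ltac:(lia) ltac:(lia).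
  rewrite (_ : i' - 1 + (i' + n + 1) - n - i' = i') // in M; last by lia.
  have Sp : sub i' n = p by rewrite M Si' revK.
  apply: (H2 i') => //; first by lia.
  by rewrite -E1 (_ : e - L = i' - 1) //; lia.
  }
set s := e - L + 1.
have Ss : sub s n = p.
  have M := mirror PQ (k := i') (n := n) ltac:(lia) ltac:(lia).
  by rewrite (_ : e - L + e - n - i' = s) // in M; [rewrite M Si' revK | lia].
have Es1 : u (s - 1) = u (i - 1) by rewrite -E1; congr u; lia.
have Esn : u (s + n) = u (i' - 1) by rewrite PQ; [congr u | ]; lia.
case: (ltngtP s i) => Hsi.
-
  set ist := s + i' - i.
  have Sis : sub ist n = rev p.
    have M := mirror PQ (k := i) (n := n) ltac:(lia) ltac:(lia).
    by rewrite (_ : e - L + e - n - i = ist) // in M; [rewrite M Si | lia].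
  have Eisn : u (ist + n) = u (i - 1) by rewrite PQ; [congr u | ]; lia.
  have Eis1 : u (ist - 1) = u (i + n) by rewrite PQ; [congr u | ]; lia.
  case: (leqP i ist) => Hiis.
    by exfalso; apply: (H1 ist) => //; lia.
  rewrite -Eis1 -Esn.
  symmetry; apply: (IH ist ltac:(lia) s) => //; try lia.
  + by rewrite Es1 Eisn.
  + move=> j Hj Sj.
    set m := s + i' - j.
    have M := mirror PQ (k := j) (n := n) ltac:(lia) ltac:(lia).
    rewrite (_ : e - L + e - n - j = m) in M; last by lia.
    have Sm : sub m n = p by rewrite M Sj revK.
    have Em : u (m - 1) = u (j + n) by rewrite PQ; [congr u | ]; lia.
    rewrite Es1 -Em; apply: H2 => //; lia.
  + move=> j Hj Sj.
    set m := s + i' - j.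
    have M := mirror PQ (k := j) (n := n) ltac:(lia) ltac:(lia).
    rewrite (_ : e - L + e - n - j = m) in M; last by lia.
    have Sm : sub m n = rev p by rewrite M Sj.
    have Em : u (m + n) = u (j - 1) by rewrite PQ; [congr u | ]; lia.
    rewrite Es1 -Em; apply: H1 => //; lia.
-
  by exfalso; apply: (H2 s) => //; lia.
- by rewrite -Esn Hsi.
Qed.

End CRsec.
End Basic.

Lemma prev_occ (P : pred nat) a b : P a -> a < b ->
  exists j, [/\ a <= j < b, P j & forall k, j < k < b -> ~~ P k].
Proof.
move=> Pa; elim: b => [|b IH] ab //.
case: (boolP (P b)) => Pb.
  by exists b; split; [lia | by [] | move=> k Hk; lia].
case: (ltngtP a b) => H; last by rewrite H (negbTE Pb) in Pa.
  have [j [Hj Pj Hk]] := IH H.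
  exists j; split; [lia | by [] | ].
  move=> k Hk'; case: (ltngtP k b) => Hkb; first by apply: Hk; lia.
    by lia.
  by rewrite Hkb.
by lia.
Qed.

Lemma next_occ (P : pred nat) a b : P b -> a < b ->
  exists j, [/\ a < j <= b, P j & forall k, a < k < j -> ~~ P k].
Proof.
move=> Pb ab.
have Ex : exists n, (a < n) && P n by exists b; rewrite ab Pb.
case: (ex_minnP Ex) => m /andP[am Pm] Hmin.
exists m; split => //.
  by rewrite am /=; apply: Hmin; rewrite ab Pb.
move=> k /andP[ak km]; apply/negP => Pk.
by have := Hmin k; rewrite ak Pk => /(_ isT); lia.
Qed.

Definition firstocc (P : pred nat) : nat :=
  match ClassicalDescription.excluded_middle_informative (exists n, P n) with
  | left H => ex_minn H | right _ => 0 end.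

Lemma firstoccP (P : pred nat) : (exists n, P n) ->
  P (firstocc P) /\ forall m, P m -> firstocc P <= m.
Proof.
rewrite /firstocc; case: ClassicalDescription.excluded_middle_informative => // H _.
by case: ex_minnP.
Qed.

Section Gen.
Variables (Vt : finType) (Vs : {set Vt}) (E : rel Vt) (O : pred nat) (al be : nat -> Vt).
Hypothesis Esym : forall x y, E x y = E y x.
Hypothesis H1 : forall j, O j ->
  [/\ al j \in Vs, be j \in Vs & (al j = be j \/ E (al j) (be j))].
Hypothesis H2 : forall j j', O j -> O j' -> j < j' ->
  (forall k, j < k < j' -> ~~ O k) -> be j = al j'.
Hypothesis H3 : forall v, v \in Vs -> exists j, O j /\ be j = v.
Hypothesis H4 : forall i i', O i -> O i' -> i < i' -> al i = be i' ->
   (forall j, i <= j < i' -> O j -> be j <> al i) ->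
   (forall j, i < j <= i' -> O j -> al j <> al i) -> al i' = be i.
Hypothesis H5 : forall x y, x \in Vs -> y \in Vs -> E x y ->
  exists i j0, [/\ O i, O j0, j0 < i & ((al i = x /\ be i = y) \/ (al i = y /\ be i = x))].

Let R := fun a b => [&& E a b, a \in Vs & b \in Vs].

Lemma Rsym : symmetric R.
Proof. by move=> a b; rewrite /R Esym; case: (E b a); case: (a \in Vs); case: (b \in Vs). Qed.

Lemma reach j1 : O j1 -> forall j, O j -> j1 <= j -> connect R (be j1) (be j).
Proof.
move=> O1 j; elim/ltn_ind: j => j IH Oj Hj.
case: (ltngtP j1 j) => H; last by rewrite H.
  have [j' [Hj' Oj' Hk]] := prev_occ O1 H.
  have C := IH j' ltac:(lia) Oj' ltac:(lia).
  have E2 := H2 Oj' Oj ltac:(lia) Hk.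
  have [Ha Hb Hab] := H1 Oj.
  case: Hab => Hab; first by rewrite -Hab -E2.
  apply: connect_trans C _; rewrite E2; apply: connect1.
  by rewrite /R Hab Ha Hb.
by lia.
Qed.

Lemma gen_connected : connectedG Vs E.
Proof.
move=> x y Hx Hy.
have [jx [Ox Bx]] := H3 Hx; have [jy [Oy By]] := H3 Hy.
have CS := sym_connect_sym Rsym.
rewrite -Bx -By.
case: (leqP jx jy) => H; first exact: reach.
by rewrite CS; apply: reach => //; lia.
Qed.

Definition F v := firstocc (fun j => O j && (be j == v)).

Lemma Fspec v j : O j -> be j = v -> [/\ O (F v), be (F v) = v & F v <= j].
Proof.
move=> Oj Bj.
have [P M] := @firstoccP (fun j => O j && (be j == v)) (ex_intro _ j (introT andP (conj Oj (introT eqP Bj)))).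
move/andP: P => [P1 /eqP P2]; split => //.
by apply: M; rewrite Oj Bj eqxx.
Qed.

Lemma E_gen i : forall x y j0, x <> y -> O i -> al i = x -> be i = y -> O j0 -> j0 < i ->
  (F x < F y /\ al (F y) = x) \/ (F y < F x /\ al (F x) = y).
Proof.
elim/ltn_ind: i => i IH x y j0 xy Oi Ai Bi Oj0 j0i.
have [OFy BFy Fyi] := Fspec Oi Bi.
case: (ltngtP (F y) i) => H; last first.
  left.
  have [j' [Hj' Oj' Hk]] := prev_occ Oj0 j0i.
  have E2 := H2 Oj' Oi ltac:(lia) Hk.
  have [_ _ Fxj] := Fspec Oj' (etrans E2 Ai).
  by rewrite H; split => //; lia.
  by lia.
have [m [Hm Pm Hk]] := @prev_occ (fun j => O j && (be j == y)) (F y) i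
  (introT andP (conj OFy (introT eqP BFy))) H.
move/andP: Pm => [Om /eqP Bm].
have [mp [Hmp Omp Hk2]] := next_occ Oi (a := m) ltac:(lia).
have Amp := H2 Om Omp ltac:(lia) Hk2.
case: (ltngtP mp i) => Hmpi; last first.
  - by exfalso; apply: xy; rewrite -Ai -Hmpi -Amp Bm.
  - by lia.
have Bmp : be mp = x.
  rewrite -Ai; symmetry; apply: H4 => //.
  - by rewrite -Amp Bm Bi.
  - move=> j Hj Oj; rewrite -Amp Bm => Bj.
    by have := Hk j ltac:(lia); rewrite Oj Bj eqxx.
  - move=> j Hj Oj.
    have [j'' [Hj'' Oj'' Hk3]] := prev_occ Omp (b := j) ltac:(lia).
    rewrite -(H2 Oj'' Oj ltac:(lia) Hk3) -Amp Bm => Bj.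
    by have := Hk j'' ltac:(lia); rewrite Oj'' Bj eqxx.
have := IH mp Hmpi y x m (fun e => xy (esym e)) Omp (etrans (esym Amp) Bm) Bmp Om ltac:(lia).
by case=> [[A1 A2]|[A1 A2]]; [right|left].
Qed.

Lemma neighbors (c : seq Vt) v : uniq c -> v \in c -> 2 < size c -> cycle E c ->
  exists a b, [/\ a \in c, b \in c, a != b & [/\ a != v, b != v, E v a & E b v]].
Proof.
move=> Hu Hv Hs Hc.
case: (rot_to Hv) => i s' Hrot.
have Hu' : uniq (v :: s') by rewrite -Hrot rot_uniq.
have Hc' : cycle E (v :: s') by rewrite -Hrot rot_cycle.
have Hs' : size (v :: s') = size c by rewrite -Hrot size_rot.
have Hm : forall z, z \in v :: s' -> z \in c by move=> z; rewrite -Hrot mem_rot.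
case: s' Hrot Hu' Hc' Hs' Hm => [|a s''] Hrot Hu' Hc' Hs' Hm; first by rewrite -Hs' in Hs.
case: s'' Hrot Hu' Hc' Hs' Hm => [|h t] Hrot Hu' Hc' Hs' Hm; first by rewrite -Hs' in Hs.
exists a, (last h t).
move: Hc'; rewrite /cycle rcons_path => /andP[Hp Hl].
move: Hp => /= /andP[Eva _].
move: Hu' => /= /andP[vn /andP[an _]].
have Hlt : last h t \in h :: t by apply: mem_last.
split; last split => //.
- by apply: Hm; rewrite !inE eqxx orbT.
- by apply: Hm; rewrite inE in_cons Hlt !orbT.
- by apply/eqP => E1; move: an; rewrite E1 Hlt.
- by apply/eqP => E1; move: vn; rewrite E1 inE eqxx.
- by apply/eqP => E1; move: vn; rewrite -E1 in_cons Hlt orbT.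
Qed.

Lemma max_in (c : seq Vt) : c != [::] ->
  exists v, v \in c /\ forall v', v' \in c -> F v' <= F v.
Proof.
elim: c => [|x c IH] // _.
case: c IH => [|y c] IH.
  by exists x; split; [rewrite inE | move=> v'; rewrite inE => /eqP ->].
have [v [Hv Hm]] := IH isT.
case: (leqP (F x) (F v)) => H.
  exists v; split; first by rewrite in_cons Hv orbT.
  by move=> v'; rewrite in_cons => /orP[/eqP ->|]; [|apply: Hm].
exists x; split; first by rewrite inE eqxx.
move=> v'; rewrite in_cons => /orP[/eqP -> //|/Hm]; lia.
Qed.

Lemma gen_acyclic : acyclicG Vs E.
Proof.
move=> c Hsub Hu Hs; apply/negP => Hc.
have cn : c != [::] by case: c Hs {Hsub Hu Hc}.
have [v [vc vmax]] := max_in cn.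
have [a [b [ac bc ab [av bv Eva Ebv]]]] := neighbors Hu vc Hs Hc.
have key : forall w, w \in c -> w != v -> E v w -> al (F v) = w.
  move=> w wc wv Evw.
  have [i [j0 [Oi Oj0 j0i Hor]]] := H5 (Hsub _ vc) (Hsub _ wc) Evw.
  have Fw := vmax w wc.
  have vw : v <> w by move=> e; move: wv; rewrite e eqxx.
  have wv' : w <> v by move=> e; move: wv; rewrite e eqxx.
  case: Hor => [[A B]|[A B]].
    have := E_gen (x := al i) (y := be i) (j0 := j0) _ Oi erefl erefl Oj0 j0i.
    rewrite A B => /(_ vw).
    case=> [[H _]|[_ H]]; last exact: H.
    by move: (leq_ltn_trans Fw H); rewrite ltnn.
  have := E_gen (x := al i) (y := be i) (j0 := j0) _ Oi erefl erefl Oj0 j0i.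
  rewrite A B => /(_ wv').
  case=> [[_ H]|[H _]]; first exact: H.
  by move: (leq_ltn_trans Fw H); rewrite ltnn.
have E1 := key a ac av Eva.
have E2 := key b bc bv ltac:(by rewrite Esym).
by move: ab; rewrite -E1 -E2 eqxx.
Qed.

End Gen.

Section Inst.
Variables (A : finType) (u : nat -> A).
Notation sub := (sub u).

Lemma factorbP (w : seq A) : reflect (factor u w) (factorb u w).
Proof. by rewrite /factorb; case: ClassicalDescription.excluded_middle_informative => H; constructor. Qed.

Lemma factorE' (w : seq A) : factor u w <-> exists p, sub p (size w) = w.
Proof. rewrite factorE; split=> [[p E]|[p E]]; exists p; by rewrite E ?size_sub. Qed.

Lemma factor_sub p n : factor u (sub p n).
Proof. by apply/factorE'; exists p; rewrite size_sub. Qed.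

Lemma sub_cons p n (w : seq A) a : sub p n.+1 = a :: w <-> u p = a /\ sub p.+1 n = w.
Proof. by rewrite subS; split => [[-> ->]|[-> ->]]. Qed.

Lemma sub_rcons p n (w : seq A) b : size w = n ->
  (sub p n.+1 = rcons w b <-> sub p n = w /\ u (p + n) = b).
Proof.
move=> Sw; rewrite subSr; split => [E|[-> ->]] //.
by case: (rcons_inj E) => -> ->.
Qed.

Lemma sub_cr p n (w : seq A) a b : size w = n ->
  (sub p n.+2 = a :: rcons w b <-> [/\ u p = a, sub p.+1 n = w & u (p.+1 + n) = b]).
Proof.
move=> Sw; rewrite sub_cons sub_rcons //.
by split => [[? [? ?]]|[? ? ?]].
Qed.

Lemma rev_cr (s : seq A) a b : rev (a :: rcons s b) = b :: rcons (rev s) a.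
Proof. by rewrite rev_cons rev_rcons. Qed.

Hypothesis Hc : closed_under_reversal u.

Lemma recur i n : exists i', i < i' /\ sub i' n = sub i n.
Proof.
have F1 := Hc (factor_sub 0 (i + n)).
move/factorE': F1; rewrite size_rev size_sub => [[q Hq]].
have F2 := Hc (factor_sub q (i + n).+1).
move: F2; rewrite subSr Hq rev_rcons revK => /factorE' [q' /=].
rewrite size_sub => /sub_cons [_ Hq'].
exists (q'.+1 + i); split; first by lia.
apply/sub_eqP => k kn.
have := (proj1 (sub_eqP u _ _ _)) Hq' (i + k) ltac:(lia).
by rewrite addnA.
Qed.

Lemma recur_factor (w : seq A) p : sub p (size w) = w -> exists p', p < p' /\ sub p' (size w) = w.
Proof. move=> E; have [p' [H1 H2]] := recur p (size w); exists p'; by rewrite H2. Qed.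

Variable N : nat.
Hypothesis HNP : forall e, N < e -> NP u e.

Section Theta.
Variable w : seq A.
Hypothesis Pw : palindrome w.
Hypothesis Fw : factor u w.
Hypothesis Nw : N < size w.
Let n := size w.
Let Ow : rev w = w.
Proof. by move/eqP: Pw. Qed.

Let O j := (0 < j) && (sub j n == w).
Let al j := u (j - 1).
Let be j := u (j + n).

Lemma Th_sym x y : Theta_E u w x y = Theta_E u w y x.
Proof. by rewrite /Theta_E eq_sym orbC. Qed.

Lemma Th_V b : (b \in Theta_V u w) = factorb u (rcons w b).
Proof. by rewrite inE. Qed.

Lemma Th_occ j : O j -> [/\ factor u (al j :: w), factor u (rcons w (be j)) &
    factor u (al j :: rcons w (be j))].
Proof.
move=> /andP[j0 /eqP Sj].
have E1 : sub (j - 1) n.+1 = al j :: w by apply/sub_cons; split => //; rewrite (_ : (j-1).+1 = j) //; lia.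
have E2 : sub j n.+1 = rcons w (be j) by apply/sub_rcons.
have E3 : sub (j - 1) n.+2 = al j :: rcons w (be j).
  by apply/sub_cr => //; rewrite (_ : (j-1).+1 = j) //; lia.
by split; [rewrite -E1 | rewrite -E2 | rewrite -E3]; apply: factor_sub.
Qed.

Lemma Th_H1 j : O j -> [/\ al j \in Theta_V u w, be j \in Theta_V u w &
   (al j = be j \/ Theta_E u w (al j) (be j))].
Proof.
move=> Oj; have [F1 F2 F3] := Th_occ Oj.
split.
- by rewrite Th_V; apply/factorbP; have := Hc F1; rewrite rev_cons Ow.
- by rewrite Th_V; apply/factorbP.
case: (eqVneq (al j) (be j)) => H; [by left | right].
by rewrite /Theta_E H /=; apply/orP; left; apply/factorbP.
Qed.

Lemma Th_H2 j j' : O j -> O j' -> j < j' -> (forall k, j < k < j' -> ~~ O k) -> be j = al j'.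
Proof.
move=> /andP[j0 /eqP Sj] /andP[j'0 /eqP Sj'] jj' Hb.
have Hb' : forall k, j < k < j' -> sub k n <> w /\ sub k n <> rev w.
  move=> k Hk; have := Hb k Hk; rewrite /O (_ : 0 < k); last by lia.
  by rewrite Ow /= => /eqP H.
have P := CR HNP (p := w) Nw (e := j' + n) jj' erefl (or_introl Sj) (or_introl Sj') Hb'.
rewrite /be /al P; last by lia.
congr u; lia.
Qed.

Lemma Th_H3 v : v \in Theta_V u w -> exists j, O j /\ be j = v.
Proof.
rewrite Th_V => /factorbP /factorE' [p Hp].
have [p' [pp' Hp']] := recur_factor Hp.
move: Hp'; rewrite size_rcons => /sub_rcons => /(_ erefl) [S1 S2].
exists p'; split => //; rewrite /O S1 eqxx andbT; lia.
Qed.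

Lemma Th_H4 i i' : O i -> O i' -> i < i' -> al i = be i' ->
   (forall j, i <= j < i' -> O j -> be j <> al i) ->
   (forall j, i < j <= i' -> O j -> al j <> al i) -> al i' = be i.
Proof.
move=> /andP[i0 /eqP Si] /andP[i'0 /eqP Si'] ii' Ex K1 K2.
apply: (@Claim A u N HNP n w Nw i' i i0 ii' Si) => //.
- by rewrite Ow.
- move=> j Hj Sj; apply: K1 => //; rewrite /O Sj Ow eqxx andbT; lia.
- move=> j Hj Sj; apply: K2 => //; rewrite /O Sj eqxx andbT; lia.
Qed.

Lemma Th_H5 x y : x \in Theta_V u w -> y \in Theta_V u w -> Theta_E u w x y ->
  exists i j0, [/\ O i, O j0, j0 < i & ((al i = x /\ be i = y) \/ (al i = y /\ be i = x))].
Proof.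
have gen : forall a b, factor u (a :: rcons w b) ->
    exists i j0, [/\ O i, O j0, j0 < i & (al i = a /\ be i = b)].
  move=> a b /factorE' [p Hp].
  have [p' [pp' Hp']] := recur_factor Hp.
  move: Hp Hp'; rewrite /= size_rcons => /sub_cr => /(_ erefl) [_ S1 _].
  move=> /sub_cr => /(_ erefl) [T1 T2 T3].
  exists p'.+1, p.+1; split => //; try lia.
  - by rewrite /O T2 eqxx.
  - by rewrite /O S1 eqxx.
  - by rewrite /al /be (_ : p'.+1 - 1 = p') //; lia.
move=> _ _ /andP[_ /orP[/factorbP F|/factorbP F]].
  by have [i [j0 [? ? ? ?]]] := gen _ _ F; exists i, j0; split => //; left.
by have [i [j0 [? ? ? ?]]] := gen _ _ F; exists i, j0; split => //; right.
Qed.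

Lemma Theta_tree : is_tree (Theta_V u w) (Theta_E u w).
Proof.
split.
- move/factorE': Fw => [i Hi]; apply/set0Pn; exists (u (i + n)).
  rewrite Th_V; apply/factorbP; rewrite -(proj2 (sub_rcons i (u (i + n)) (erefl n)) (conj Hi erefl)).
  exact: factor_sub.
- apply: (gen_connected (O := O) (al := al) (be := be));
  first [exact: Th_sym | exact: Th_H1 | exact: Th_H2 | exact: Th_H3 | exact: Th_H4 | exact: Th_H5].
- apply: (gen_acyclic (O := O) (al := al) (be := be));
  first [exact: Th_sym | exact: Th_H1 | exact: Th_H2 | exact: Th_H3 | exact: Th_H4 | exact: Th_H5].
Qed.

End Theta.
Section Gamma.
Variable w : seq A.
Hypothesis NPw : ~~ palindrome w.
Hypothesis Fw : factor u w.
Hypothesis Nw : N < size w.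
Let n := size w.
Let Hrw : (rev w == w) = false.
Proof. by apply/negbTE; move: NPw; rewrite /palindrome eq_sym. Qed.
Let Hwr : (w == rev w) = false.
Proof. by rewrite eq_sym Hrw. Qed.

Let O j := (0 < j) && ((sub j n == w) || (sub j n == rev w)).
Let al j := (u (j - 1), sub j n != w).
Let be j := (u (j + n), sub j n == w).

Lemma G_sym x y : Gamma_E u w x y = Gamma_E u w y x.
Proof. by case: x => [a []]; case: y => [b []]. Qed.

Lemma G_V x : (x \in Gamma_V u w) = (if x.2 then factorb u (rcons w x.1) else factorb u (x.1 :: w)).
Proof. by rewrite inE. Qed.

Lemma occ_facts j : 0 < j -> [/\ factor u (u (j - 1) :: sub j n),
   factor u (rcons (sub j n) (u (j + n))) &
   factor u (u (j - 1) :: rcons (sub j n) (u (j + n)))].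
Proof.
move=> j0.
have E1 : sub (j - 1) n.+1 = u (j - 1) :: sub j n
  by apply/sub_cons; split => //; rewrite (_ : (j-1).+1 = j) //; lia.
have E2 : sub j n.+1 = rcons (sub j n) (u (j + n)) by apply/sub_rcons; rewrite ?size_sub.
have E3 : sub (j - 1) n.+2 = u (j - 1) :: rcons (sub j n) (u (j + n)).
  by apply/sub_cr; rewrite ?size_sub //; rewrite (_ : (j-1).+1 = j) //; lia.
by split; [rewrite -E1 | rewrite -E2 | rewrite -E3]; apply: factor_sub.
Qed.

Lemma G_H1 j : O j -> [/\ al j \in Gamma_V u w, be j \in Gamma_V u w &
   (al j = be j \/ Gamma_E u w (al j) (be j))].
Proof.
move=> /andP[j0 Sj]; have [F1 F2 F3] := occ_facts j0.
rewrite !G_V /al /be /Gamma_E /=.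
case/orP: Sj => /eqP Sj; rewrite Sj ?eqxx ?Hrw /= in F1 F2 F3 *.
  by split; [apply/factorbP | apply/factorbP | right; apply/factorbP].
split; [apply/factorbP | apply/factorbP | right; apply/factorbP].
- by have := Hc F1; rewrite rev_cons revK.
- by have := Hc F2; rewrite rev_rcons revK.
- by have := Hc F3; rewrite rev_cr revK.
Qed.

Lemma G_H2 j j' : O j -> O j' -> j < j' -> (forall k, j < k < j' -> ~~ O k) -> be j = al j'.
Proof.
move=> /andP[j0 Sj] /andP[j'0 Sj'] jj' Hb.
have Hb' : forall k, j < k < j' -> sub k n <> w /\ sub k n <> rev w.
  move=> k Hk; have := Hb k Hk; rewrite /O (_ : 0 < k) /=; last by lia.
  by case: eqP => //; case: eqP.
have Sj1 : sub j n = w \/ sub j n = rev w by case/orP: Sj => /eqP; tauto.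
have Sj'1 : sub j' n = w \/ sub j' n = rev w by case/orP: Sj' => /eqP; tauto.
have P := CR HNP (p := w) Nw (e := j' + n) jj' erefl Sj1 Sj'1 Hb'.
have M := mirror P (k := j) (n := n) ltac:(lia) ltac:(lia).
rewrite (_ : j + (j' + n) - n - j = j') in M; last by lia.
rewrite /be /al M P; last by lia.
rewrite (_ : j + (j' + n) - 1 - (j + n) = j' - 1); last by lia.
by case: Sj1 => ->; rewrite ?revK ?eqxx ?Hrw.
Qed.

Lemma G_H3 v : v \in Gamma_V u w -> exists j, O j /\ be j = v.
Proof.
case: v => [a []]; rewrite G_V /= => /factorbP.
  move=> /factorE' [p Hp].
  have [p' [pp' Hp']] := recur_factor Hp.
  move: Hp'; rewrite size_rcons => /sub_rcons => /(_ erefl) [S1 S2].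
  exists p'; split; first by rewrite /O S1 eqxx /=; lia.
  by rewrite /be S1 S2 eqxx.
move/Hc; rewrite rev_cons => /factorE' [p Hp].
have [p' [pp' Hp']] := recur_factor Hp.
move: Hp'; rewrite size_rcons size_rev => /sub_rcons => /(_ (size_rev w)) [S1 S2].
exists p'; split; first by rewrite /O S1 eqxx orbT /=; lia.
by rewrite /be S1 S2 Hrw.
Qed.

Lemma G_H4 i i' : O i -> O i' -> i < i' -> al i = be i' ->
   (forall j, i <= j < i' -> O j -> be j <> al i) ->
   (forall j, i < j <= i' -> O j -> al j <> al i) -> al i' = be i.
Proof.
move=> /andP[i0 Si] /andP[i'0 Si'] ii' Ex K1 K2.
have Si1 : sub i n = w \/ sub i n = rev w by case/orP: Si => /eqP; tauto.
have Sp : sub i' n = rev (sub i n).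
  move: Ex; rewrite /al /be => [[_ B]].
  case: Si1 B => -> B; rewrite ?revK.
    case/orP: Si' => /eqP Si'; rewrite Si' // in B *.
    by rewrite eqxx in B.
  by apply/eqP; rewrite -B Hrw.
set p := sub i n.
have Hbool : forall s, s = p \/ s = rev p -> (s == w) = ~~ (rev s == w).
  move=> s Hs; rewrite /p in Hs; case: Si1 Hs => -> [->|->]; rewrite ?revK ?eqxx ?Hrw //.
have Ex1 : u (i - 1) = u (i' + n) by move: Ex => [[->]].
have Op : forall j, 0 < j -> sub j n = p \/ sub j n = rev p -> O j.
  move=> j j0 Hj; rewrite /O j0 /=; rewrite /p in Hj.
  by case: Si1 Hj => -> [->|->]; rewrite ?revK eqxx ?orbT.
have K1' : forall j, i <= j < i' -> sub j n = rev p -> u (j + n) <> u (i - 1).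
  move=> j Hj Sj E; apply: (K1 j _ (Op j _ (or_intror Sj))); [lia|lia|].
  rewrite /be /al E Sj (Hbool (rev p) (or_intror erefl)) revK //.
have K2' : forall j, i < j <= i' -> sub j n = p -> u (j - 1) <> u (i - 1).
  move=> j Hj Sj E; apply: (K2 j _ (Op j _ (or_introl Sj))); [lia|lia|].
  by rewrite /al E Sj.
have C := @Claim A u N HNP n p Nw i' i i0 ii' erefl Sp Ex1 K1' K2'.
rewrite /al /be C Sp (Hbool (rev p) (or_intror erefl)) revK negbK //.
Qed.

Lemma G_H5 x y : x \in Gamma_V u w -> y \in Gamma_V u w -> Gamma_E u w x y ->
  exists i j0, [/\ O i, O j0, j0 < i & ((al i = x /\ be i = y) \/ (al i = y /\ be i = x))].
Proof.
have gen : forall a b, factor u (a :: rcons w b) ->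
    exists i j0, [/\ O i, O j0, j0 < i & (al i = (a, false) /\ be i = (b, true))].
  move=> a b /factorE' [p Hp].
  have [p' [pp' Hp']] := recur_factor Hp.
  move: Hp Hp'; rewrite /= size_rcons => /sub_cr => /(_ erefl) [_ S1 _].
  move=> /sub_cr => /(_ erefl) [T1 T2 T3].
  exists p'.+1, p.+1; split => //; try lia.
  - by rewrite /O T2 eqxx.
  - by rewrite /O S1 eqxx.
  - split; rewrite /al /be; congr pair; rewrite /n ?T2 ?T3 ?eqxx //.
    by rewrite -T1; congr u; lia.
case: x => [a []]; case: y => [b []] _ _ //= /factorbP F.
  by have [i [j0 [? ? ? ?]]] := gen _ _ F; exists i, j0; split => //; right.
by have [i [j0 [? ? ? ?]]] := gen _ _ F; exists i, j0; split => //; left.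
Qed.

Lemma Gamma_tree : is_tree (Gamma_V u w) (Gamma_E u w).
Proof.
split.
- move/factorE': Fw => [i Hi]; apply/set0Pn; exists (u (i + n), true).
  rewrite G_V /=; apply/factorbP; rewrite -(proj2 (sub_rcons i (u (i + n)) (erefl n)) (conj Hi erefl)).
  exact: factor_sub.
- apply: (gen_connected (O := O) (al := al) (be := be));
  first [exact: G_sym | exact: G_H1 | exact: G_H2 | exact: G_H3 | exact: G_H4 | exact: G_H5].
- apply: (gen_acyclic (O := O) (al := al) (be := be));
  first [exact: G_sym | exact: G_H1 | exact: G_H2 | exact: G_H3 | exact: G_H4 | exact: G_H5].
Qed.

End Gamma.
End Inst.

Theorem corollary22 (A : finType) (u : nat -> A) :
  closed_under_reversal u -> finite_defect u ->
  exists K : nat, 0 < K /\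
    forall w : seq A, factor u w -> K <= size w ->
      (~~ palindrome w -> is_tree (Gamma_V u w) (Gamma_E u w)) /\
      (palindrome w -> is_tree (Theta_V u w) (Theta_E u w)).
Proof.
move=> Hc Hd.
have [N HNP] := NP_eventually Hd.
exists N.+1; split => // w Fw Kw.
have Nw : N < size w by lia.
split => [Hnp | Hp].
- exact: (Gamma_tree Hc HNP Hnp Fw Nw).
- exact: (Theta_tree Hc HNP Hp Fw Nw).
Qed.
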